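(* If $X$ is a compact Alexandroff space, then the number of distinct basic sets in $X$ is at most $\min(X)$.
   Context: A topological space $X$ is an Alexandroff space if arbitrary intersections of open sets are open. In an Alexandroff space, $S(x)$ denotes the minimal open neighborhood of $x$, i.e. the intersection of all open sets containing $x$, which is open. $S(x)$ is called basic if for all $y,z\in X$: whenever $S(x)\subseteq S(y)$ and $S(z)\subseteq S(y)$ then $S(x)\subseteq S(z)$; and whenever $S(x)\not\subseteq S(y)$ then $S(x)\cap S(y)=\emptyset$. A basic set of $X$ is a set of the form $S(x)$ that is basic. For a compact Alexandroff space $X$, $\min(X)$ is the minimum cardinality $|V|$ over all finite covers $V$ of $X$ consisting of sets of the form $S(x)$, $x\in X$. *)

(* Defs.v *)
From mathcomp Require Import all_boot all_order.
From mathcomp Require Import finmap.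
From mathcomp Require Import all_classical topology.
Set Implicit Arguments. Unset Strict Implicit. Unset Printing Implicit Defensive.
Local Open Scope classical_set_scope.

Definition alexandroff (T : topologicalType) : Prop :=
  forall (F : set (set T)), (forall U, F U -> open U) -> open (\bigcap_(U in F) U).

Definition Smin (T : topologicalType) (x : T) : set T :=
  \bigcap_(U in [set U : set T | open U /\ U x]) U.

Definition is_basic (T : topologicalType) (x : T) : Prop :=
  forall y z : T,
    (Smin x `<=` Smin y -> Smin z `<=` Smin y -> Smin x `<=` Smin z) /\
    (~ (Smin x `<=` Smin y) -> Smin x `&` Smin y = set0).

Definition basic_sets (T : topologicalType) : set (set T) :=
  [set B | exists x : T, B = Smin x /\ is_basic x].

Definition S_cover (T : topologicalType) (V : {fset (set T)}) : Prop :=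
  (forall B, B \in V -> exists x : T, B = Smin x) /\
  (forall t : T, exists2 B, B \in V & B t).

(* Main.v *)
Require Import Defs.
From mathcomp Require Import all_boot all_order.
From mathcomp Require Import finmap.
From mathcomp Require Import all_classical topology.
Local Open Scope classical_set_scope.

Lemma Smin_open (T : topologicalType) (x : T) : alexandroff T -> open (Smin x).
Proof. by move=> hA; apply: hA => U [] . Qed.

Lemma Smin_self (T : topologicalType) (x : T) : Smin x x.
Proof. by move=> U [] . Qed.

Lemma Smin_sub (T : topologicalType) (x v : T) : alexandroff T ->
  Smin v x -> Smin x `<=` Smin v.
Proof. by move=> hA hv t ht; apply: ht; split => //; exact: Smin_open. Qed.

Theorem theorem17 (T : topologicalType) :
  alexandroff T -> compact [set: T] ->
  forall V : {fset (set T)}, S_cover V ->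
    finite_set (@basic_sets T) /\ (#|` fset_set (@basic_sets T)| <= #|` V|)%N.
Proof.
move=> hA _ V [hV hcov].
have uniq : forall C B B', C \in V -> basic_sets B -> basic_sets B' ->
    B `<=` C -> B' `<=` C -> B = B'.
  move=> C B B' /hV [v ->] [x [-> bx]] [x' [-> bx']] h1 h2.
  apply/seteqP; split.
  - by apply: (bx v x').1.
  - by apply: (bx' v x).1.
have ex : forall B, basic_sets B -> exists C, C \in V /\ B `<=` C.
  move=> B [x [-> _]]; have [C CV Cx] := hcov x.
  exists C; split => //; have [v ev] := hV C CV; subst C.
  exact: Smin_sub.
pose A := [set C | C \in V /\ exists B, basic_sets B /\ B `<=` C].
pose h (C : set T) := xget (set0 : set T) [set B | basic_sets B /\ B `<=` C].
have AV : A `<=` [set` V] by move=> C [].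
have finA : finite_set A by exact: (sub_finite_set AV (finite_fset V)).
have eqB : @basic_sets T = h @` A.
  apply/seteqP; split.
  - move=> B bB; have [C [CV BC]] := ex B bB.
    have hA' : A C by split => //; exists B.
    exists C => //.
    have [] : [set B | basic_sets B /\ B `<=` C] (h C) by apply: xgetPex; exists B.
    by move=> bh hC; apply: uniq CV bh bB hC BC.
  - move=> B [C [CV [B0 [bB0 B0C]]] <-].
    have [] : [set B | basic_sets B /\ B `<=` C] (h C) by apply: xgetPex; exists B0.
    by [].
split; first by rewrite eqB; exact: finite_image.
rewrite eqB fset_set_image //.
apply: (leq_trans (leq_imfset_card _ _ _)).
apply: uniq_leq_size; first exact: enum_finmem_uniq.
move=> C; rewrite enum_finmemE /= in_fset_set // inE => /AV.
by [].
Qed.
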